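(* Fix $\alpha\in(1/2,1)$. Then for every $n\ge 0$ and every binary rooted tree $T$ on $n$ nodes, the tree $B_n$ defined below contains a subgraph isomorphic to a subdivision of $T$. Equivalently, there is an injective map $f$ from the nodes of $T$ to the nodes of $B_n$ with $f(\mathsf{NCA}(u,v))=\mathsf{NCA}(f(u),f(v))$ for all $u,v$. Definition of $a_N$: for integers $N\ge 0$, $a_0$ is the empty sequence, $a_1=(1)$, and for $N\ge 2$, $a_N=a_{\lfloor N/2\rfloor}\oplus(N)\oplus a_{\lfloor N/2\rfloor}$, where $\oplus$ denotes concatenation. Definition of $B_n$: $B_0$ is the empty tree and $B_1$ is a single node. For $n\ge 2$, let $N=\lfloor(1-\alpha)n\rfloor$ and $a_N=(a(1),\dots,a(k))$. Then $B_n$ consists of a path $u_1-u_2-\dots-u_{k+1}$ rooted at $u_1$, with the following subtrees attached: - for each $i=1,\dots,k$, a copy of $B_{a(i)-1}$ attached to $u_i$; - a copy of $B_{\lfloor\alpha n\rfloor}$ attached to $u_{k+1}$; - a copy of $B_{\lfloor (n-1)/2\rfloor}$ attached to $u_{k+1}$. Attaching a copy of a tree to a node means making its root a child of that node; attaching the empty tree adds nothing.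
   Context: Trees are rooted and unordered, with edges directed from parent to child. A tree is binary if every node has at most two children. $\mathsf{NCA}$ denotes the nearest common ancestor. *)

(* Defs.v *)
From mathcomp Require Import all_boot all_order all_algebra.
From mathcomp Require Import reals.
Set Implicit Arguments. Unset Strict Implicit. Unset Printing Implicit Defensive.
Import Order.TTheory GRing.Theory Num.Theory.

(* Rooted binary trees: [BLeaf] is the empty tree, [BNode l r] a node whose
   (at most two) children are the roots of the nonempty trees among l, r.
   Left/right order is immaterial for the statement (every unordered binary
   rooted tree has such a representation). *)
Inductive btree := BLeaf | BNode of btree & btree.

Fixpoint bsize (t : btree) : nat :=
  if t is BNode l r then (bsize l + bsize r).+1 else 0.

(* Nodes are addressed by their path from the root (false = left, true = right). *)
Fixpoint is_node (t : btree) (p : seq bool) : bool :=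
  match t, p with
  | BLeaf, _ => false
  | BNode _ _, [::] => true
  | BNode l r, b :: p' => is_node (if b then r else l) p'
  end.

(* Nearest common ancestor = longest common prefix of addresses. *)
Fixpoint nca (p q : seq bool) : seq bool :=
  match p, q with
  | b :: p', c :: q' => if b == c then b :: nca p' q' else [::]
  | _, _ => [::]
  end.

Fixpoint aseq_aux (fuel N : nat) : seq nat :=
  match fuel with
  | 0 => [::]
  | f.+1 => if N == 0 then [::] else if N == 1 then [:: 1]
            else aseq_aux f N./2 ++ [:: N] ++ aseq_aux f N./2
  end.
Definition aseq (N : nat) : seq nat := aseq_aux N N.

(* The trees B_n (with fuel; fuel n.+1 is enough since all recursive
   arguments are < n). *)
Fixpoint Bfuel (R : realType) (alpha : R) (fuel n : nat) : btree :=
  match fuel with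
  | 0 => BLeaf
  | f.+1 =>
    if n == 0 then BLeaf else if n == 1 then BNode BLeaf BLeaf else
    let N := Num.truncn ((1 - alpha) * n%:R) in
    foldr (fun ai t => BNode (Bfuel alpha f ai.-1) t)
          (BNode (Bfuel alpha f (Num.truncn (alpha * n%:R)))
                 (Bfuel alpha f (n.-1)./2))
          (aseq N)
  end.
Definition B (R : realType) (alpha : R) (n : nat) : btree := Bfuel alpha n.+1 n.

(* Main.v *)
Require Import Defs.
From mathcomp Require Import all_boot all_order all_algebra.
From mathcomp Require Import reals.
From mathcomp Require Import zify ring lra.
Import Order.TTheory GRing.Theory Num.Theory.

Definition emb (T U : btree) : Prop :=
  exists f : seq bool -> seq bool,
    [/\ (forall p, is_node T p -> is_node U (f p)),
        {in is_node T &, injective f} &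
        (forall p q, is_node T p -> is_node T q ->
           f (nca p q) = nca (f p) (f q))].

Lemma emb_leaf U : emb BLeaf U.
Proof. by exists id; split. Qed.

Lemma emb_node L R UL UR : emb L UL -> emb R UR -> emb (BNode L R) (BNode UL UR).
Proof.
case=> [fL [hL1 hL2 hL3]] [fR [hR1 hR2 hR3]].
pose F (b : bool) := if b then fR else fL.
exists (fun p => if p is b :: p' then b :: F b p' else [::]); split.
- by case=> [|b p] //=; case: b => /= ?; [apply: hR1|apply: hL1].
- move=> [|b p] [|c q] //; rewrite /in_mem /= => hp hq [e1]; subst c.
  by case: b hp hq => /= hp hq e; [rewrite (hR2 p q hp hq e) | rewrite (hL2 p q hp hq e)].
- move=> [|b p] [|c q] //= hp hq; case: b c hp hq => [] [] //= hp hq;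
  by [rewrite hR3 | rewrite hL3].
Qed.

Lemma emb_swap L R : emb (BNode L R) (BNode R L).
Proof.
exists (fun p => if p is b :: p' then ~~ b :: p' else [::]); split.
- by case=> [|[] p].
- move=> [|b p] [|c q] //; rewrite /in_mem /= => hp hq [].
  by move/(congr1 negb); rewrite !negbK => -> ->.
- by move=> [|b p] [|c q] //= hp hq; case: b c hp hq => [] [].
Qed.

Lemma emb_comp T U V : emb T U -> emb U V -> emb T V.
Proof.
case=> [f [h1 h2 h3]] [g [k1 k2 k3]].
exists (g \o f); split.
- by move=> p hp /=; apply/k1/h1.
- move=> p q hp hq /= e; apply: h2 => //; apply: k2 => //; exact: h1.
- by move=> p q hp hq /=; rewrite h3 // k3 //; apply: h1.
Qed.

Lemma emb_node_swap L R UL UR : emb L UR -> emb R UL -> emb (BNode L R) (BNode UL UR).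
Proof. move=> a b; exact: (emb_comp _ _ _ (emb_node _ _ _ _ a b) (emb_swap _ _)). Qed.

Lemma emb_down T U X : emb T U -> emb T (BNode X U).
Proof.
case=> [f [h1 h2 h3]]; exists (fun p => true :: f p); split => //.
- by move=> p q hp hq [/h2]; apply.
- by move=> p q hp hq /=; rewrite h3.
Qed.

Fixpoint fits (ws xs : seq nat) : bool :=
  match xs with
  | [::] => nilp ws
  | a :: xs' => match ws with
                | [::] => true
                | w :: ws' => ((w <= a) && fits ws' xs') || fits ws xs'
                end
  end.

Lemma fits_nil xs : fits [::] xs.
Proof. by case: xs. Qed.

Lemma fits_cons ws x xs : fits ws xs -> fits ws (x :: xs).
Proof. by case: ws => //= w ws ->; rewrite orbT. Qed.

Lemma fits_cat xs1 ws1 ws2 xs2 :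
  fits ws1 xs1 -> fits ws2 xs2 -> fits (ws1 ++ ws2) (xs1 ++ xs2).
Proof.
elim: xs1 ws1 => [|x xs1 IH] [|w ws1] //=; last first.
2: move=> _ h; case: ws2 h IH => // w ws h IH; apply/orP; right;
  exact: (IH [::] (fits_nil _) h).
case/orP => [/andP[hw h] h2|h h2].
    by rewrite hw (IH ws1).
  by rewrite (IH (w :: ws1)) ?orbT.
Qed.

Lemma split_budget h ws s0 : s0 <= h ->
  (s0 + sumn ws <= h) \/ exists ws1 w ws2,
    [/\ ws = ws1 ++ w :: ws2, s0 + sumn ws1 <= h & h < s0 + sumn ws1 + w].
Proof.
elim: ws s0 => [|x ws IH] s0 hs /=; first by left; lia.
case: (leqP (s0 + x) h) => hx.
- case: (IH _ hx) => [l|[ws1 [w [ws2 [-> h1 h2]]]]]; first by left; lia.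
  right; exists (x :: ws1), w, ws2; split => //=; lia.
- by right; exists [::], x, ws; split => //=; lia.
Qed.

Lemma aseq_unfold f N : 0 < N ->
  aseq_aux f.+1 N = aseq_aux f N./2 ++ N :: aseq_aux f N./2.
Proof.
case: N => [|[|N]] //= _; by case: f.
Qed.

Lemma aseq_le f N a : a \in aseq_aux f N -> a <= N.
Proof.
elim: f N => [|f IH] N //=.
case: (eqVneq N 0) => [->|_] //.
case: (eqVneq N 1) => [->|_]; first by rewrite inE => /eqP ->.
rewrite mem_cat inE => /orP[/IH|/orP[/eqP->|/IH]] //; lia.
Qed.

Lemma fits_aseq f N ws : N <= f -> all (fun w => 0 < w) ws -> sumn ws <= N ->
  fits ws (aseq_aux f N).
Proof.
elim: f N ws => [|f IH] N ws hN hpos hs.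
  have -> : N = 0 by lia.
  by case: ws hpos hs => //= w ws /andP[w0 _]; lia.
case: (posnP N) => [N0|Npos].
  subst N; rewrite /=.
  by case: ws hpos hs => //= w ws /andP[w0 _]; lia.
rewrite aseq_unfold //.
have hh : N./2 <= f by lia.
case: (split_budget (N./2) ws 0 (leq0n _)) => [l|[ws1 [w [ws2 [E h1 h2]]]]].
  rewrite -[ws]cats0; apply: fits_cat; first by apply: IH.
  exact: fits_nil.
move: hpos hs; rewrite E all_cat sumn_cat /= => /andP[p1 /andP[_ p2]] hs.
apply: fits_cat; first by apply: IH => //; lia.
rewrite /= IH //; first by rewrite andbT; apply/orP; left; lia.
lia.
Qed.

Fixpoint W (K : nat) (T : btree) : seq nat :=
  if T is BNode l r then
    if bsize l <= bsize r then (if bsize r <= K then [::] else (bsize l).+1 :: W K r)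
    else (if bsize l <= K then [::] else (bsize r).+1 :: W K l)
  else [::].

Lemma W_pos K T : all (fun w => 0 < w) (W K T).
Proof.
elim: T => [|l IHl r IHr] //=.
by case: ifP => _; case: ifP => _ //=.
Qed.

Lemma W_sum K T : sumn (W K T) <= bsize T - K.+1.
Proof.
elim: T => [|l IHl r IHr] //=.
case: ifP => h1; case: ifP => h2 //= ; lia.
Qed.

Lemma spine_emb (G : nat -> btree) (Bt : btree) (K n : nat) (xs : seq nat) :
  (forall T', bsize T' <= n -> W K T' = [::] -> emb T' Bt) ->
  (forall a s, a \in xs -> bsize s < a -> emb s (G a)) ->
  forall T, bsize T <= n -> fits (W K T) xs ->
  emb T (foldr (fun a t => BNode (G a) t) Bt xs).
Proof.
move=> HP; elim: xs => [|x xs IH] HQ T hT /=.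
  by move/nilP; apply: HP.
have HQ' : forall a s, a \in xs -> bsize s < a -> emb s (G a).
  by move=> a s ha; apply: HQ; rewrite inE ha orbT.
case E: (W K T) => [|w ws].
  by move=> _; apply: emb_down; apply: IH => //; rewrite E fits_nil.
case/orP => [/andP[hw hf]|hf]; last first.
  by apply: emb_down; apply: IH => //; rewrite E.
case: T hT E => [|l r] //= hT.
case: ifP => h1; case: ifP => h2 // [ew ews]; subst w ws.
- apply: emb_node.
  + by apply: HQ => //; rewrite inE eqxx.
  + by apply: IH => //; lia.
- apply: emb_node_swap.
  + by apply: IH => //; lia.
  + by apply: HQ => //; rewrite inE eqxx.
Qed.

Local Open Scope ring_scope.

Lemma real_facts (R : realType) (alpha : R) (n : nat) : 2^-1 < alpha < 1 -> (0 < n)%N ->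
  [/\ (Num.truncn ((1 - alpha) * n%:R) <= n)%N, (Num.truncn (alpha * n%:R) < n)%N &
      (n <= Num.truncn ((1 - alpha) * n%:R) + Num.truncn (alpha * n%:R) + 1)%N].
Proof.
move=> /andP[ha1 ha2] n0.
have a0 : 0 <= alpha by apply: le_trans (ltW ha1); rewrite invr_ge0.
have nr : 0 < n%:R :> R by rewrite ltr0n.
split.
- rewrite truncn_le_nat; apply: (le_lt_trans (y := n%:R)); last by rewrite ltr_nat.
  by rewrite ler_piMl ?ler0n // lerBlDr lerDl.
- rewrite truncn_lt_nat ?mulr_ge0 ?ler0n //.
  by rewrite gtr_pMl.
- have h1 := truncnS_gt ((1 - alpha) * n%:R).
  have h2 := truncnS_gt (alpha * n%:R).
  rewrite -ltnS -(ltr_nat R).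
  set x := Num.truncn _ in h1 *; set y := Num.truncn _ in h2 *.
  have -> : (x + y + 1).+1%:R = x.+1%:R + y.+1%:R :> R.
    by rewrite -natrD; congr (_%:R); lia.
  have -> : n%:R = (1 - alpha) * n%:R + alpha * n%:R :> R by ring.
  lra.
Qed.

Lemma Bfuel_unfold (R : realType) (alpha : R) f n : (1 < n)%N ->
  Bfuel alpha f.+1 n =
  foldr (fun ai t => BNode (Bfuel alpha f ai.-1) t)
        (BNode (Bfuel alpha f (Num.truncn (alpha * n%:R)))
               (Bfuel alpha f (n.-1)./2))
        (aseq (Num.truncn ((1 - alpha) * n%:R))).
Proof. by case: n => [|[|n]]. Qed.

Lemma main_fuel (R : realType) (alpha : R) : 2^-1 < alpha < 1 ->
  forall f n T, (n < f)%N -> (bsize T <= n)%N -> emb T (Bfuel alpha f n).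
Proof.
move=> ha; elim=> [|f IH] n T // hn hT.
case: (ltnP 1 n) => n1; last first.
  case: n n1 hn hT => [|[|m]] // _ _.
  - by case: T => [|l r] // _; exact: emb_leaf.
  - case: T => [|l r] /=; first by move=> _; apply: emb_leaf.
    case: l => //; case: r => // _; apply: emb_node; apply: emb_leaf.
rewrite Bfuel_unfold //.
have [hN hK hNK] := real_facts _ alpha n ha (ltnW n1).
set K := Num.truncn _ in hK hNK *; set N := Num.truncn _ in hN hNK *.
apply: (spine_emb _ _ K n) => //.
- case=> [|l r] hT' /=; first by move=> _; apply: emb_leaf.
  case: ifP => h1; case: ifP => h2 // _.
  + apply: emb_node_swap; apply: IH; rewrite /= in hT';
      (lia || (rewrite leq_half_double; lia)).
  + apply: emb_node; apply: IH; rewrite /= in hT';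
      (lia || (rewrite leq_half_double; lia)).
- move=> a s ha' hs; apply: IH; last by lia.
  have := aseq_le _ _ _ ha'; rewrite /aseq; lia.
- apply: fits_aseq => //; first exact: W_pos.
  have := W_sum K T; lia.
Qed.

Theorem lemma2 (R : realType) (alpha : R) :
  2^-1 < alpha < 1 ->
  forall (n : nat) (T : btree), bsize T = n ->
  exists f : seq bool -> seq bool,
    [/\ (forall p, is_node T p -> is_node (B alpha n) (f p)),
        {in is_node T &, injective f} &
        (forall p q, is_node T p -> is_node T q ->
           f (nca p q) = nca (f p) (f q))].
Proof.
move=> ha n T hT.
have := main_fuel _ alpha ha n.+1 n T (ltnSn n) (eq_leq hT).
by [].
Qed.
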